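(* In the process algebra $\mathcal{G}$ described in the context, for all $\mathbb{P}_u,\mathbb{P}_v,\mathbb{P},\mathbb{Q}$ (as defined in the context) and all $W\in\mathcal{W}$: (1) $D\simeq D\|G_u\mathbb{P}_u\simeq D\|G_v'\mathbb{P}_v\mathbb{P}_u\simeq D\|Z\mathbb{P}_v\mathbb{P}_u\simeq D\|\mathbb{P}_v\mathbb{P}_u\simeq D\|W\mathbb{P}_v\mathbb{P}_u$; (2) $C\simeq C\|G\mathbb{P}\simeq C\|\mathbb{P}\simeq C\|W\mathbb{P}\simeq C\|G_v\mathbb{P}_v$; (3) $C'\simeq C'\|G'\mathbb{Q}\simeq C'\|G_v\mathbb{Q}\simeq C'\|Z\mathbb{Q}\simeq C'\|\mathbb{Q}$.
   Context: Process algebras: a triple $(\mathcal{C},\mathcal{A},\Delta)$ of finitely many constants, actions (including silent $\tau$) and rules $X\stackrel{\ell}{\longrightarrow}P$. Processes: $P::=\epsilon\mid X\mid PP'\mid P\|P'$, sequential composition associative, parallel composition associative and commutative, $\epsilon$ a unit for both. Semantics: rules of $\Delta$; if $P\stackrel{\ell}{\longrightarrow}P'$ then $PQ\stackrel{\ell}{\longrightarrow}P'Q$, $P\|Q\stackrel{\ell}{\longrightarrow}P'\|Q$, $Q\|P\stackrel{\ell}{\longrightarrow}Q\|P'$. $\Longrightarrow$ is the reflexive transitive closure of $\stackrel{\tau}{\longrightarrow}$. Branching bisimilarity $\simeq$ is the largest relation $\mathcal{B}$ such that whenever $P\mathcal{B}Q$ and $P\stackrel{\ell}{\longrightarrow}P'$,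 either $Q\Longrightarrow Q''\stackrel{\ell}{\longrightarrow}Q'$ with $P\mathcal{B}Q''$ and $P'\mathcal{B}Q'$, or $\ell=\tau$ and $P'\mathcal{B}Q$; and symmetrically. The algebra $\mathcal{G}$: fix a finite alphabet $\Sigma$ with $|\Sigma|\ge2$ and a Post Correspondence instance $\mathrm{INST}=\{(u_1,v_1),\dots,(u_n,v_n)\}$ with $u_k,v_k\in\Sigma^{+}$; let $\mathcal{N}=\{1,\dots,n\}$. Actions: $\{\lambda_U,\lambda_V,\lambda_D,\lambda_I,\lambda_S,\lambda_Z\}\cup\mathcal{N}\cup\Sigma\cup\{\tau\}$. Constants: $X,Y,Z,I,S,C,C',D,G,G',G_u,G_v,G_v'$, $U_k,V_k$ ($k\in\mathcal{N}$), and $W(\omega,k),W(\omega,0)$ for $k\in\mathcal{N}$ and $\omega$ a (possibly empty) suffix of $u_k$ or of $v_k$; $\mathcal{W}$ is the set of these $W$-constants. Rules (with $k$ ranging over $\mathcal{N}$, $a$ over $\Sigma$, $W$ over $\mathcal{W}$): $X\stackrel{\lambda_U}{\longrightarrow}D\|G_v$, $X\stackrel{\tau}{\longrightarrow}D$, $Y\stackrel{\tau}{\longrightarrow}D$, $D\stackrel{\tau}{\longrightarrow}D\|G_u$, $D\stackrel{\lambda_D}{\longrightarrow}C$; $G_u\stackrel{\tau}{\longrightarrow}G_uU_k$, $G_u\stackrel{\lambda_U}{\longrightarrow}G_vU_k$, $G_u\stackrel{\tau}{\longrightarrow}G_v'$, $G_v'\stackrel{\tau}{\longrightarrow}G_v'V_k$,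 $G_v'\stackrel{\tau}{\longrightarrow}Z$; $G_v\stackrel{\tau}{\longrightarrow}G_vV_k$, $G_v\stackrel{\tau}{\longrightarrow}\epsilon$, $G_v\stackrel{\lambda_V}{\longrightarrow}Z$, $Z\stackrel{\tau}{\longrightarrow}\epsilon$, $Z\stackrel{\lambda_Z}{\longrightarrow}\epsilon$; $C\stackrel{\lambda_I}{\longrightarrow}I$, $C\stackrel{\lambda_S}{\longrightarrow}S$, $C\stackrel{\tau}{\longrightarrow}C\|G$, $C\stackrel{\tau}{\longrightarrow}C\|G_v$; $G\stackrel{\tau}{\longrightarrow}GU_k$, $G\stackrel{\tau}{\longrightarrow}GV_k$, $G\stackrel{\tau}{\longrightarrow}\epsilon$; $I\stackrel{\lambda_I}{\longrightarrow}C'$, $I\stackrel{k}{\longrightarrow}I$, $S\stackrel{\lambda_S}{\longrightarrow}C'$, $S\stackrel{a}{\longrightarrow}S$, $C'\stackrel{\tau}{\longrightarrow}C'\|G'$, $C'\stackrel{\tau}{\longrightarrow}\epsilon$; $G'\stackrel{\tau}{\longrightarrow}G'U_k$, $G'\stackrel{\tau}{\longrightarrow}G'V_k$, $G'\stackrel{\tau}{\longrightarrow}G'W$, $G'\stackrel{\tau}{\longrightarrow}G_v$, $G'\stackrel{\tau}{\longrightarrow}Z$; $U_k\stackrel{\tau}{\longrightarrow}W(u_k,k)$, $V_k\stackrel{\tau}{\longrightarrow}W(v_k,k)$; $W(a\omega,k)\stackrel{a}{\longrightarrow}W(\omega,k)$, $W(a\omega,0)\stackrel{a}{\longrightarrow}W(\omega,0)$,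 $W(\omega,k)\stackrel{k}{\longrightarrow}W(\omega,0)$, $W(a\omega,k)\stackrel{\tau}{\longrightarrow}W(\omega,k)$, $W(a\omega,0)\stackrel{\tau}{\longrightarrow}W(\omega,0)$, $W(\omega,k)\stackrel{\tau}{\longrightarrow}W(\omega,0)$, $W(\epsilon,0)\stackrel{\tau}{\longrightarrow}\epsilon$. Notation: $\mathbb{P}_u$ (resp. $\mathbb{P}_v$) denotes a sequential composition (possibly empty, i.e. $\epsilon$) of constants from $\{U_k:k\in\mathcal{N}\}$ (resp. $\{V_k:k\in\mathcal{N}\}$); $\mathbb{P}$ (resp. $\mathbb{Q}$) denotes a sequential composition (possibly empty) of constants from $\{U_k,V_k:k\in\mathcal{N}\}$ (resp. $\{U_k,V_k:k\in\mathcal{N}\}\cup\mathcal{W}$). *)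

(* Defs.v *)
From mathcomp Require Import all_boot.
Set Implicit Arguments.
Unset Strict Implicit.
Unset Printing Implicit Defensive.

(* The process algebra G, parameterised by an alphabet Sigma and a PCP
   instance given by n and the words u k, v k (k : 'I_n; the index set
   N = {1..n} of the paper is represented by 'I_n, and the special index 0
   of W(omega,0) by None : option 'I_n). *)
Section ProcessAlgebraG.
Variables (Sigma : finType) (n : nat) (u v : 'I_n -> seq Sigma).

Inductive act : Type :=
  | lamU | lamV | lamD | lamI | lamS | lamZ
  | actN of 'I_n
  | actA of Sigma
  | tau.

(* Constants.  cW w k stands for W(w,k) (k = Some k') or W(w,0) (k = None);
   only those satisfying [isW] below belong to the algebra. *)
Inductive const : Type :=
  | cX | cY | cZ | cI | cS | cC | cC' | cD | cG | cG' | cGu | cGv | cGv'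
  | cU of 'I_n
  | cV of 'I_n
  | cW of seq Sigma & option 'I_n.

Definition isW (c : const) : Prop :=
  match c with
  | cW w (Some k) => suffix w (u k) \/ suffix w (v k)
  | cW w None => exists k, suffix w (u k) \/ suffix w (v k)
  | _ => False
  end.

Inductive proc : Type :=
  | Eps
  | Con of const
  | Seq of proc & proc
  | Par of proc & proc.

(* Structural congruence: sequential composition associative, parallel
   composition associative and commutative, eps a unit for both.
   Processes are terms modulo this congruence. *)
Inductive sc : proc -> proc -> Prop :=
  | sc_refl P : sc P P
  | sc_sym P Q : sc P Q -> sc Q P
  | sc_trans P Q R : sc P Q -> sc Q R -> sc P R
  | sc_seq P P' Q Q' : sc P P' -> sc Q Q' -> sc (Seq P Q) (Seq P' Q')
  | sc_par P P' Q Q' : sc P P' -> sc Q Q' -> sc (Par P Q) (Par P' Q')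
  | sc_seqA P Q R : sc (Seq P (Seq Q R)) (Seq (Seq P Q) R)
  | sc_parA P Q R : sc (Par P (Par Q R)) (Par (Par P Q) R)
  | sc_parC P Q : sc (Par P Q) (Par Q P)
  | sc_seq1l P : sc (Seq Eps P) P
  | sc_seq1r P : sc (Seq P Eps) P
  | sc_par1l P : sc (Par Eps P) P.

Local Notation C c := (Con c).

Inductive rule : const -> act -> proc -> Prop :=
  | r_X1 : rule cX lamU (Par (C cD) (C cGv))
  | r_X2 : rule cX tau (C cD)
  | r_Y : rule cY tau (C cD)
  | r_D1 : rule cD tau (Par (C cD) (C cGu))
  | r_D2 : rule cD lamD (C cC)
  | r_Gu1 k : rule cGu tau (Seq (C cGu) (C (cU k)))
  | r_Gu2 k : rule cGu lamU (Seq (C cGv) (C (cU k)))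
  | r_Gu3 : rule cGu tau (C cGv')
  | r_Gv'1 k : rule cGv' tau (Seq (C cGv') (C (cV k)))
  | r_Gv'2 : rule cGv' tau (C cZ)
  | r_Gv1 k : rule cGv tau (Seq (C cGv) (C (cV k)))
  | r_Gv2 : rule cGv tau Eps
  | r_Gv3 : rule cGv lamV (C cZ)
  | r_Z1 : rule cZ tau Eps
  | r_Z2 : rule cZ lamZ Eps
  | r_C1 : rule cC lamI (C cI)
  | r_C2 : rule cC lamS (C cS)
  | r_C3 : rule cC tau (Par (C cC) (C cG))
  | r_C4 : rule cC tau (Par (C cC) (C cGv))
  | r_G1 k : rule cG tau (Seq (C cG) (C (cU k)))
  | r_G2 k : rule cG tau (Seq (C cG) (C (cV k)))
  | r_G3 : rule cG tau Eps
  | r_I1 : rule cI lamI (C cC')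
  | r_I2 k : rule cI (actN k) (C cI)
  | r_S1 : rule cS lamS (C cC')
  | r_S2 a : rule cS (actA a) (C cS)
  | r_C'1 : rule cC' tau (Par (C cC') (C cG'))
  | r_C'2 : rule cC' tau Eps
  | r_G'1 k : rule cG' tau (Seq (C cG') (C (cU k)))
  | r_G'2 k : rule cG' tau (Seq (C cG') (C (cV k)))
  | r_G'3 W : isW W -> rule cG' tau (Seq (C cG') (C W))
  | r_G'4 : rule cG' tau (C cGv)
  | r_G'5 : rule cG' tau (C cZ)
  | r_U k : rule (cU k) tau (C (cW (u k) (Some k)))
  | r_V k : rule (cV k) tau (C (cW (v k) (Some k)))
  | r_Wa a w k : isW (cW (a :: w) k) -> rule (cW (a :: w) k) (actA a) (C (cW w k))
  | r_Wk w k : isW (cW w (Some k)) -> rule (cW w (Some k)) (actN k) (C (cW w None))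
  | r_Wta a w k : isW (cW (a :: w) k) -> rule (cW (a :: w) k) tau (C (cW w k))
  | r_Wtk w k : isW (cW w (Some k)) -> rule (cW w (Some k)) tau (C (cW w None))
  | r_Weps : isW (cW [::] None) -> rule (cW [::] None) tau Eps.

Inductive step : proc -> act -> proc -> Prop :=
  | st_rule c l P : rule c l P -> step (C c) l P
  | st_seq P l P' Q : step P l P' -> step (Seq P Q) l (Seq P' Q)
  | st_parl P l P' Q : step P l P' -> step (Par P Q) l (Par P' Q)
  | st_parr P l P' Q : step P l P' -> step (Par Q P) l (Par Q P')
  | st_sc P P1 l P1' P' : sc P P1 -> step P1 l P1' -> sc P1' P' -> step P l P'.

Inductive taus : proc -> proc -> Prop :=
  | taus_refl P : taus P P
  | taus_step P P' P'' : step P tau P' -> taus P' P'' -> taus P P''.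

Definition bb_transfer (B : proc -> proc -> Prop) : Prop :=
  forall P Q, B P Q -> forall l P', step P l P' ->
    (exists Q'' Q', taus Q Q'' /\ step Q'' l Q' /\ B P Q'' /\ B P' Q')
    \/ (l = tau /\ B P' Q).

Definition branching_bisimulation (B : proc -> proc -> Prop) : Prop :=
  bb_transfer B /\ bb_transfer (fun P Q => B Q P).

Definition bbisim (P Q : proc) : Prop :=
  exists B, branching_bisimulation B /\ B P Q.

Definition seqs (ps : seq proc) : proc := foldr Seq Eps ps.

Definition Pu (ks : seq 'I_n) : proc := seqs [seq C (cU k) | k <- ks].
Definition Pv (ks : seq 'I_n) : proc := seqs [seq C (cV k) | k <- ks].
Definition Pc (cs : seq const) : proc := seqs [seq C c | c <- cs].

Definition isUV (c : const) : Prop :=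
  match c with cU _ | cV _ => True | _ => False end.


Definition allc (P : const -> Prop) (cs : seq const) : Prop :=
  foldr (fun c acc => P c /\ acc) True cs.

End ProcessAlgebraG.

Arguments cX {Sigma n}.
Arguments cY {Sigma n}.
Arguments cZ {Sigma n}.
Arguments cI {Sigma n}.
Arguments cS {Sigma n}.
Arguments cC {Sigma n}.
Arguments cC' {Sigma n}.
Arguments cD {Sigma n}.
Arguments cG {Sigma n}.
Arguments cG' {Sigma n}.
Arguments cGu {Sigma n}.
Arguments cGv {Sigma n}.
Arguments cGv' {Sigma n}.
Arguments lamU {Sigma n}.
Arguments lamV {Sigma n}.
Arguments lamD {Sigma n}.
Arguments lamI {Sigma n}.
Arguments lamS {Sigma n}.
Arguments lamZ {Sigma n}.
Arguments tau {Sigma n}.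
Arguments Eps {Sigma n}.

(* Main.v *)
Require Import Defs.
From mathcomp Require Import all_boot zify.
From Stdlib Require Import Lia.
Set Implicit Arguments.
Unset Strict Implicit.
Unset Printing Implicit Defensive.

Fixpoint cnt (Sigma : finType) (n : nat) (P : proc Sigma n) : nat :=
  match P with
  | Eps => 0 | Con _ => 1
  | Seq P Q => cnt P + cnt Q | Par P Q => cnt P + cnt Q end.

Lemma cnt_sc (Sigma : finType) (n : nat) (P Q : proc Sigma n) : sc P Q -> cnt P = cnt Q.
Proof. elim=> //= *; lia. Qed.

Lemma cnt0_sc (Sigma : finType) (n : nat) (P : proc Sigma n) : cnt P = 0 -> sc P Eps.
Proof.
elim: P => //= [|P IP Q IQ|P IP Q IQ] H.
- exact: sc_refl.
- apply: sc_trans (sc_seq (IP _) (IQ _)) (sc_seq1l _); lia.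
- apply: sc_trans (sc_par (IP _) (IQ _)) (sc_par1l _); lia.
Qed.

Fixpoint pcs (Sigma : finType) (n : nat) (P : proc Sigma n) : seq (proc Sigma n) :=
  match P with
  | Eps => [::] | Con c => [:: Con c]
  | Par P Q => pcs P ++ pcs Q
  | Seq P Q => if cnt P == 0 then pcs Q else if cnt Q == 0 then pcs P else [:: Seq P Q]
  end.

Lemma pcs0 (Sigma : finType) (n : nat) (P : proc Sigma n) : cnt P = 0 -> pcs P = [::].
Proof.
elim: P => //= [P IP Q IQ|P IP Q IQ] H.
- have -> : cnt P == 0 by apply/eqP; lia. apply: IQ; lia.
- rewrite IP ?IQ //; lia.
Qed.

Inductive perm (Sigma : finType) (n : nat) : seq (proc Sigma n) -> seq (proc Sigma n) -> Prop :=
  | pnil : perm [::] [::]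
  | pskip x y l1 l2 : sc x y -> perm l1 l2 -> perm (x :: l1) (y :: l2)
  | pswap x y l : perm (x :: y :: l) (y :: x :: l)
  | ptrans l1 l2 l3 : perm l1 l2 -> perm l2 l3 -> perm l1 l3.

Lemma perm_refl (Sigma : finType) (n : nat) (l : seq (proc Sigma n)) : perm l l.
Proof. elim: l => [|x l IH]; constructor => //; exact: sc_refl. Qed.

Lemma perm_sym (Sigma : finType) (n : nat) (l1 l2 : seq (proc Sigma n)) : perm l1 l2 -> perm l2 l1.
Proof.
elim=> *; [constructor|apply: pskip; [exact: sc_sym|done]|exact: pswap|apply: ptrans; eassumption].
Qed.

Lemma perm_catl (Sigma : finType) (n : nat) (l l1 l2 : seq (proc Sigma n)) :
  perm l1 l2 -> perm (l ++ l1) (l ++ l2).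
Proof. elim: l => //= x l IH H; apply: pskip (sc_refl _) (IH H). Qed.

Lemma perm_catr (Sigma : finType) (n : nat) (l l1 l2 : seq (proc Sigma n)) :
  perm l1 l2 -> perm (l1 ++ l) (l2 ++ l).
Proof.
elim=> /=; [exact: perm_refl| by move=> *; apply: pskip| move=> *; apply: pswap
 | move=> *; apply: ptrans; eassumption].
Qed.

Lemma perm_cat (Sigma : finType) (n : nat) (l1 l2 l3 l4 : seq (proc Sigma n)) :
  perm l1 l2 -> perm l3 l4 -> perm (l1 ++ l3) (l2 ++ l4).
Proof. move=> H1 H2; apply: ptrans (perm_catr _ H1) (perm_catl _ H2). Qed.

Lemma perm_cons_cat (Sigma : finType) (n : nat) (x : proc Sigma n) l :
  perm (x :: l) (l ++ [:: x]).
Proof.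
elim: l => /= [|y l IH]; first exact: perm_refl.
apply: ptrans (pswap _ _ _) _; apply: pskip (sc_refl _) IH.
Qed.

Lemma perm_catC (Sigma : finType) (n : nat) (l1 l2 : seq (proc Sigma n)) :
  perm (l1 ++ l2) (l2 ++ l1).
Proof.
elim: l1 l2 => /= [|x l1 IH] l2; first by rewrite cats0; exact: perm_refl.
apply: ptrans (pskip (sc_refl x) (IH l2)) _.
elim: l2 {IH} => /= [|y l2 IH]; first exact: perm_refl.
apply: ptrans (pswap _ _ _) _; exact: pskip (sc_refl _) IH.
Qed.

Lemma perm_middle (Sigma : finType) (n : nat) (x : proc Sigma n) l1 l2 :
  perm (x :: l1 ++ l2) (l1 ++ x :: l2).
Proof.
elim: l1 => /= [|y l1 IH]; first exact: perm_refl.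
apply: ptrans (pswap _ _ _) _; exact: pskip (sc_refl _) IH.
Qed.

Lemma perm_extract (Sigma : finType) (n : nat) (L1 L2 : seq (proc Sigma n)) :
  perm L1 L2 -> forall La x Lb, L1 = La ++ x :: Lb ->
  exists Ma y Mb, L2 = Ma ++ y :: Mb /\ sc x y /\ perm (La ++ Lb) (Ma ++ Mb).
Proof.
elim=> {L1 L2}.
- by move=> [].
- move=> x0 y0 l1 l2 Hs Hp IH [|z La] x Lb /= [E1 E2].
  + rewrite -E1 -E2. exists [::], y0, l2; split=> //.
  + rewrite -E1 in Hs *. have [Ma [y [Mb [E [Hxy Hp']]]]] := IH La x Lb E2.
    exists (y0 :: Ma), y, Mb; rewrite E; split=> //; split=> //=; exact: pskip.
- move=> x0 y0 l [|z1 [|z2 La]] x Lb /= E.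
  + case: E => E1 E2. rewrite -E1 -E2. exists [:: y0], x0, l; split=> //; split; [exact: sc_refl| exact: perm_refl].
  + case: E => E1 E2 E3. rewrite -E1 -E2 -E3. exists [::], y0, (x0 :: l); split=> //; split; [exact: sc_refl| exact: perm_refl].
  + case: E => E1 E2 E3. rewrite -E1 -E2 E3. exists [:: y0, x0 & La], x, Lb; split=> //; split;
    [exact: sc_refl| apply: pswap].
- move=> l1 l2 l3 _ IH1 _ IH2 La x Lb E.
  have [Ma [y [Mb [E' [Hxy Hp]]]]] := IH1 La x Lb E.
  have [Na [z [Nb [E'' [Hyz Hp']]]]] := IH2 Ma y Mb E'.
  exists Na, z, Nb; split=> //; split; [exact: sc_trans Hyz| exact: ptrans Hp'].
Qed.

Lemma pcs_sc (Sigma : finType) (n : nat) (P Q : proc Sigma n) : sc P Q -> perm (pcs P) (pcs Q).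
Proof.
elim=> {P Q}.
- move=> P; exact: perm_refl.
- move=> *; exact: perm_sym.
- move=> *; apply: ptrans; eassumption.
- move=> P P' Q Q' HP IP HQ IQ /=.
  rewrite (cnt_sc HP) (cnt_sc HQ).
  case: eqP => _ //; case: eqP => _ //. apply: pskip (pnil _ _); exact: sc_seq.
- move=> *; exact: perm_cat.
- move=> P Q R /=; rewrite !addn_eq0.
  case hP: (cnt P == 0); case hQ: (cnt Q == 0); case hR: (cnt R == 0) => /=;
    rewrite ?hP ?hQ ?hR /=; try exact: perm_refl.
  1-4: apply: pskip; last exact: pnil.
  + apply: sc_seq; last exact: sc_refl. apply: sc_sym.
    exact: sc_trans (sc_seq (cnt0_sc (eqP hP)) (sc_refl _)) (sc_seq1l _).
  + exact: sc_seqA.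
  + apply: sc_seq; first exact: sc_refl.
    exact: sc_trans (sc_seq (sc_refl _) (cnt0_sc (eqP hR))) (sc_seq1r _).
  + exact: sc_seqA.
- move=> P Q R /=; rewrite catA; exact: perm_refl.
- move=> P Q /=; exact: perm_catC.
- move=> P /=; exact: perm_refl.
- move=> P /=; case: eqP => h; last exact: perm_refl.
  rewrite pcs0 //; exact: pnil.
- move=> P /=; exact: perm_refl.
Qed.

Definition parall (Sigma : finType) (n : nat) (L : seq (proc Sigma n)) : proc Sigma n := foldr (@Par Sigma n) Eps L.

Lemma sc_par0r (Sigma : finType) (n : nat) (X : proc Sigma n) : sc (Par X Eps) X.
Proof. exact: sc_trans (sc_parC _ _) (sc_par1l _). Qed.

Lemma parall_cat (Sigma : finType) (n : nat) (L1 L2 : seq (proc Sigma n)) :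
  sc (parall (L1 ++ L2)) (Par (parall L1) (parall L2)).
Proof.
elim: L1 => /= [|x L1 IH]; first exact: sc_sym (sc_par1l _).
apply: sc_trans (sc_par (sc_refl x) IH) _; exact: sc_parA.
Qed.

Lemma sc_parall (Sigma : finType) (n : nat) (P : proc Sigma n) : sc P (parall (pcs P)).
Proof.
elim: P => /= [|c|P IP Q IQ|P IP Q IQ].
- exact: sc_refl.
- exact: sc_sym (sc_par0r _).
- case: eqP => hP.
  + apply: sc_trans IQ; apply: sc_trans (sc_seq (cnt0_sc hP) (sc_refl _)) (sc_seq1l _).
  + case: eqP => hQ.
    * apply: sc_trans IP; apply: sc_trans (sc_seq (sc_refl _) (cnt0_sc hQ)) (sc_seq1r _).
    * exact: sc_sym (sc_par0r _).
- apply: sc_trans (sc_par IP IQ) _; exact: sc_sym (parall_cat _ _).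
Qed.

Lemma perm_parall (Sigma : finType) (n : nat) (L M : seq (proc Sigma n)) :
  perm L M -> sc (parall L) (parall M).
Proof.
elim=> /=.
- exact: sc_refl.
- move=> x y l1 l2 H _ IH; exact: sc_par.
- move=> x y l. apply: sc_trans (sc_parA _ _ _) _.
  apply: sc_trans (sc_par (sc_parC _ _) (sc_refl _)) _. exact: sc_sym (sc_parA _ _ _).
- move=> *; apply: sc_trans; eassumption.
Qed.

Lemma perm_pcs_sc (Sigma : finType) (n : nat) (P Q : proc Sigma n) :
  perm (pcs P) (pcs Q) -> sc P Q.
Proof.
move=> H; apply: sc_trans (sc_parall P) _; apply: sc_trans (perm_parall H) _.
exact: sc_sym (sc_parall Q).
Qed.

Fixpoint allp (T : Type) (f : T -> Prop) (l : seq T) : Prop :=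
  match l with [::] => True | x :: l => f x /\ allp f l end.

Lemma allp_cat (T : Type) (f : T -> Prop) l1 l2 : allp f (l1 ++ l2) <-> allp f l1 /\ allp f l2.
Proof. elim: l1 => /= [|x l1 IH]; [tauto| rewrite IH; tauto]. Qed.

Definition comp (Sigma : finType) (n : nat) (x : proc Sigma n) := pcs x = [:: x].

Lemma pcs_comp (Sigma : finType) (n : nat) (P : proc Sigma n) : allp (@comp Sigma n) (pcs P).
Proof.
elim: P => /= [|c|P IP Q IQ|P IP Q IQ] //.
- case: eqP => // hP; case: eqP => // hQ /=; split=> //.
  rewrite /comp /=; do 2 (case: eqP => //).
- by apply/allp_cat.
Qed.

Lemma pcs_parall (Sigma : finType) (n : nat) (L : seq (proc Sigma n)) :
  allp (@comp Sigma n) L -> pcs (parall L) = L.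
Proof. elim: L => //= x L IH [Hx HL]; by rewrite Hx IH. Qed.

Lemma cnt_step (Sigma : finType) (n : nat) u v (P : proc Sigma n) l P' :
  step u v P l P' -> 0 < cnt P.
Proof.
elim=> //= [*|*|*|P0 P1 l0 P1' P0' H _ IH _]; try lia. by rewrite (cnt_sc H).
Qed.

Lemma step_inv (Sigma : finType) (n : nat) u v (P : proc Sigma n) l P' :
  step u v P l P' -> exists x x' R, comp x /\ step u v x l x' /\ sc P (Par x R) /\ sc P' (Par x' R).
Proof.
elim=> {P l P'}.
- move=> c l P H; exists (Con c), P, Eps; split=> //; split; first exact: st_rule.
  split; exact: sc_sym (sc_par0r _).
- move=> P l P' Q HS [x [x' [R [Hc [Hx [H1 H2]]]]]].
  case: (cnt Q =P 0) => hQ.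
  + exists x, x', R; split=> //; split=> //; split.
    * apply: sc_trans H1; exact: sc_trans (sc_seq (sc_refl _) (cnt0_sc hQ)) (sc_seq1r _).
    * apply: sc_trans H2; exact: sc_trans (sc_seq (sc_refl _) (cnt0_sc hQ)) (sc_seq1r _).
  + exists (Seq P Q), (Seq P' Q), Eps; split.
    * rewrite /comp /=. have := cnt_step HS. case: eqP => //; [lia|]. by case: eqP.
    * split; first exact: st_seq. split; exact: sc_sym (sc_par0r _).
- move=> P l P' Q _ [x [x' [R [Hc [Hx [H1 H2]]]]]].
  exists x, x', (Par R Q); split=> //; split=> //; split.
  + apply: sc_trans (sc_par H1 (sc_refl _)) _; exact: sc_sym (sc_parA _ _ _).
  + apply: sc_trans (sc_par H2 (sc_refl _)) _; exact: sc_sym (sc_parA _ _ _).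
- move=> P l P' Q _ [x [x' [R [Hc [Hx [H1 H2]]]]]].
  exists x, x', (Par Q R); split=> //; split=> //; split.
  + apply: sc_trans (sc_par (sc_refl _) H1) _. apply: sc_trans (sc_parA _ _ _) _.
    apply: sc_trans (sc_par (sc_parC _ _) (sc_refl _)) _. exact: sc_sym (sc_parA _ _ _).
  + apply: sc_trans (sc_par (sc_refl _) H2) _. apply: sc_trans (sc_parA _ _ _) _.
    apply: sc_trans (sc_par (sc_parC _ _) (sc_refl _)) _. exact: sc_sym (sc_parA _ _ _).
- move=> P P1 l P1' P' HP _ [x [x' [R [Hc [Hx [H1 H2]]]]]] HP'.
  exists x, x', R; split=> //; split=> //; split.
  + exact: sc_trans H1. + exact: sc_trans (sc_sym HP') H2.
Qed.

Fixpoint lin (Sigma : finType) (n : nat) (P : proc Sigma n) : option (seq (const Sigma n)) :=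
  match P with
  | Eps => Some [::]
  | Con c => Some [:: c]
  | Seq P Q => match lin P, lin Q with Some a, Some b => Some (a ++ b) | _, _ => None end
  | Par P Q => if cnt P == 0 then lin Q else if cnt Q == 0 then lin P else None
  end.

Lemma lin0 (Sigma : finType) (n : nat) (P : proc Sigma n) : cnt P = 0 -> lin P = Some [::].
Proof.
elim: P => //= [P IP Q IQ|P IP Q IQ] H.
- rewrite IP ?IQ //; lia.
- have -> : cnt P == 0 by apply/eqP; lia. apply: IQ; lia.
Qed.

Lemma lin_sc (Sigma : finType) (n : nat) (P Q : proc Sigma n) : sc P Q -> lin P = lin Q.
Proof.
elim=> {P Q} //=.
- move=> P Q R _ -> _ ->; done.
- by move=> P P' Q Q' _ -> _ ->.
- move=> P P' Q Q' HP -> HQ ->; by rewrite (cnt_sc HP) (cnt_sc HQ).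
- move=> P Q R. case: (lin P) => // a; case: (lin Q) => // b; case: (lin R) => // c.
  by rewrite catA.
- move=> P Q R; rewrite !addn_eq0.
  case hP: (cnt P == 0); case hQ: (cnt Q == 0); case hR: (cnt R == 0) => //=;
  rewrite ?hP ?hQ ?hR //.
- move=> P Q. case hP: (cnt P == 0); case hQ: (cnt Q == 0) => //.
  by rewrite !lin0 //; apply/eqP.
- move=> P; by case: (lin P).
- move=> P; case: (lin P) => // a; by rewrite cats0.
Qed.

Lemma lin_size (Sigma : finType) (n : nat) (P : proc Sigma n) l : lin P = Some l -> size l = cnt P.
Proof.
elim: P l => /= [|c|P IP Q IQ|P IP Q IQ] l.
- by case=> <-.
- by case=> <-.
- case E1: (lin P) => [a|] //; case E2: (lin Q) => [b|] // [<-].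
  by rewrite size_cat (IP _ E1) (IQ _ E2).
- case: eqP => hP. move=> /IQ ->; lia.
  case: eqP => hQ //. move=> /IP ->; lia.
Qed.

Lemma lin_Pc (Sigma : finType) (n : nat) (l : seq (const Sigma n)) : lin (Pc l) = Some l.
Proof. elim: l => //= c l. rewrite /Pc /= => ->; done. Qed.

Lemma Pc_cat (Sigma : finType) (n : nat) (a b : seq (const Sigma n)) :
  sc (Pc (a ++ b)) (Seq (Pc a) (Pc b)).
Proof.
elim: a => /= [|c a IH]; first exact: sc_sym (sc_seq1l _).
rewrite /Pc /= -/(Pc _) -/(Pc _) -/(Pc _).
apply: sc_trans (sc_seq (sc_refl _) IH) _; exact: sc_seqA.
Qed.

Lemma lin_Pc_sc (Sigma : finType) (n : nat) (P : proc Sigma n) l : lin P = Some l -> sc P (Pc l).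
Proof.
elim: P l => /= [|c|P IP Q IQ|P IP Q IQ] l.
- case=> <-; exact: sc_refl.
- case=> <-; rewrite /Pc /=; exact: sc_sym (sc_seq1r _).
- case E1: (lin P) => [a|] //; case E2: (lin Q) => [b|] // [<-].
  apply: sc_trans (sc_seq (IP _ E1) (IQ _ E2)) _; exact: sc_sym (Pc_cat _ _).
- case: eqP => hP.
  + move=> /IQ H. apply: sc_trans H. apply: sc_trans (sc_par (cnt0_sc hP) (sc_refl _)) (sc_par1l _).
  + case: eqP => hQ // /IP H. apply: sc_trans H.
    apply: sc_trans (sc_par (sc_refl _) (cnt0_sc hQ)) (sc_par0r _).
Qed.

Lemma list_inv (Sigma : finType) (n : nat) u v (P : proc Sigma n) l P' :
  step u v P l P' -> forall c cs, lin P = Some (c :: cs) ->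
  exists R0, rule u v c l R0 /\ sc P' (Seq R0 (Pc cs)).
Proof.
elim=> {P l P'}.
- move=> c0 l P H c cs /= [E1 <-]; subst c0; exists P; split=> //; exact: sc_sym (sc_seq1r _).
- move=> P l P' Q HS IH c cs /=.
  case E1: (lin P) => [a|] //; case E2: (lin Q) => [b|] // [Eab].
  case: a E1 Eab => [|c' a] E1 /= Eab.
  + move: (lin_size E1) (cnt_step HS) => /= ? ?; exfalso; lia.
  + case: Eab => Ec Ecs; subst c'. have [R0 [HR HP']] := IH c a E1.
    exists R0; split=> //. rewrite -Ecs.
    apply: sc_trans (sc_seq HP' (lin_Pc_sc E2)) _.
    apply: sc_trans (sc_sym (sc_seqA _ _ _)) _. apply: sc_seq (sc_refl _) _.
    exact: sc_sym (Pc_cat _ _).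
- move=> P l P' Q HS IH c cs /=.
  case: eqP => hP. move: (cnt_step HS) => ?; exfalso; lia.
  case: eqP => hQ // E. have [R0 [HR HP']] := IH c cs E.
  exists R0; split=> //. apply: sc_trans (sc_par HP' (cnt0_sc hQ)) (sc_par0r _).
- move=> P l P' Q HS IH c cs /=.
  case: eqP => hQ.
  + move=> E. have [R0 [HR HP']] := IH c cs E.
    exists R0; split=> //. apply: sc_trans (sc_par (cnt0_sc hQ) HP') (sc_par1l _).
  + case: eqP => hP //. move: (cnt_step HS) => ?; exfalso; lia.
- move=> P P1 l P1' P' HP _ IH HP' c cs E.
  rewrite (lin_sc HP) in E. have [R0 [HR H]] := IH c cs E.
  exists R0; split=> //. exact: sc_trans (sc_sym HP') H.
Qed.

Definition treach (Sigma : finType) (n : nat) u v (P Q : proc Sigma n) :=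
  exists Q', taus u v P Q' /\ sc Q' Q.

Lemma treach_sc (Sigma : finType) (n : nat) u v (P Q : proc Sigma n) : sc P Q -> treach u v P Q.
Proof. move=> H; exists P; split=> //; exact: taus_refl. Qed.

Lemma treach_step (Sigma : finType) (n : nat) u v (P P' Q : proc Sigma n) :
  step u v P tau P' -> treach u v P' Q -> treach u v P Q.
Proof. move=> H [Q' [H1 H2]]; exists Q'; split=> //; exact: taus_step H H1. Qed.

Lemma taus_sc_l (Sigma : finType) (n : nat) u v (P0 Q : proc Sigma n) :
  taus u v P0 Q -> forall P, sc P P0 -> exists Q', taus u v P Q' /\ sc Q' Q.
Proof.
case=> [R|R R' R'' H1 H2] P HP.
- exists P; split=> //; exact: taus_refl.
- exists R''; split; last exact: sc_refl. apply: taus_step _ H2.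
  exact: st_sc HP H1 (sc_refl _).
Qed.

Lemma taus_trans (Sigma : finType) (n : nat) u v (P Q R : proc Sigma n) :
  taus u v P Q -> taus u v Q R -> taus u v P R.
Proof. elim=> // P1 P2 P3 H _ IH H'; exact: taus_step H (IH H'). Qed.

Lemma treach_trans (Sigma : finType) (n : nat) u v (P Q R : proc Sigma n) :
  treach u v P Q -> treach u v Q R -> treach u v P R.
Proof.
move=> [Q' [H1 H2]] [R' [H3 H4]].
have [R'' [H5 H6]] := taus_sc_l H3 H2.
exists R''; split; [exact: taus_trans H1 H5| exact: sc_trans H6 H4].
Qed.

Lemma treach_refl (Sigma : finType) (n : nat) u v (P : proc Sigma n) : treach u v P P.
Proof. exact: treach_sc (sc_refl _). Qed.

Lemma treach_rule (Sigma : finType) (n : nat) u v c (P : proc Sigma n) :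
  rule u v c tau P -> treach u v (Con c) P.
Proof. move=> H; apply: treach_step (st_rule H) (treach_refl _ _ _). Qed.

Lemma treach_ctx (Sigma : finType) (n : nat) u v (f : proc Sigma n -> proc Sigma n) :
  (forall P P', step u v P tau P' -> step u v (f P) tau (f P')) ->
  (forall P P', sc P P' -> sc (f P) (f P')) ->
  forall P Q, treach u v P Q -> treach u v (f P) (f Q).
Proof.
move=> Hs Hc P Q [Q' [H1 H2]]; exists (f Q'); split; last exact: Hc.
elim: H1 {H2} => [R|R R' R'' H _ IH]; [exact: taus_refl| exact: taus_step (Hs _ _ H) IH].
Qed.

Lemma treach_parl (Sigma : finType) (n : nat) u v (X P Q : proc Sigma n) :
  treach u v P Q -> treach u v (Par P X) (Par Q X).
Proof.
apply: (treach_ctx (f := fun P => Par P X)); [move=> *; exact: st_parl| move=> *; exact: sc_par (sc_refl _)].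
Qed.

Lemma treach_parr (Sigma : finType) (n : nat) u v (X P Q : proc Sigma n) :
  treach u v P Q -> treach u v (Par X P) (Par X Q).
Proof.
apply: (treach_ctx (f := fun P => Par X P)); [move=> *; exact: st_parr| move=> *; exact: sc_par (sc_refl _) _].
Qed.

Lemma treach_seq (Sigma : finType) (n : nat) u v (X P Q : proc Sigma n) :
  treach u v P Q -> treach u v (Seq P X) (Seq Q X).
Proof.
apply: (treach_ctx (f := fun P => Seq P X)); [move=> *; exact: st_seq| move=> *; exact: sc_seq (sc_refl _)].
Qed.

Lemma treach_sc_l (Sigma : finType) (n : nat) u v (P P0 Q : proc Sigma n) :
  sc P P0 -> treach u v P0 Q -> treach u v P Q.
Proof. move=> H; apply: treach_trans; exact: treach_sc. Qed.

Lemma treach_sc_r (Sigma : finType) (n : nat) u v (P Q Q0 : proc Sigma n) :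
  treach u v P Q0 -> sc Q0 Q -> treach u v P Q.
Proof. move=> H1 H2; apply: treach_trans H1 _; exact: treach_sc. Qed.

Definition Mut (Sigma : finType) (n : nat) u v (P Q : proc Sigma n) :=
  treach u v P Q /\ treach u v Q P.

Lemma match_reach (Sigma : finType) (n : nat) u v (P Q : proc Sigma n) l P' :
  treach u v Q P -> step u v P l P' ->
  exists Q'' Q', taus u v Q Q'' /\ step u v Q'' l Q' /\ Mut u v P Q'' /\ Mut u v P' Q'.
Proof.
move=> [P0 [H1 H2]] HS. exists P0, P'; split=> //; split; first exact: st_sc (H2) HS (sc_refl _).
split; split; try exact: treach_refl; apply: treach_sc => //; exact: sc_sym.
Qed.

Lemma Mut_bisim (Sigma : finType) (n : nat) u v : branching_bisimulation u v (@Mut Sigma n u v).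
Proof.
split=> P Q HB l P' HS; left.
- exact: match_reach (proj2 HB) HS.
- have [Q'' [Q' [H1 [H2 [[H3 H4] [H5 H6]]]]]] := match_reach (proj1 HB) HS.
  exists Q'', Q'; do 3 (split=> //).
Qed.

Lemma isW_suffix (Sigma : finType) (n : nat) u v (s t : seq Sigma) (x : option 'I_n) :
  isW u v (cW s x) -> suffix t s -> isW u v (cW t x).
Proof.
case: x => [k|] /=.
- move=> [H|H] Ht; [left|right]; exact: suffix_trans Ht H.
- move=> [k [H|H]] Ht; exists k; [left|right]; exact: suffix_trans Ht H.
Qed.

Lemma W_reduce (Sigma : finType) (n : nat) u v (s t : seq Sigma) (x : option 'I_n) :
  isW u v (cW s x) -> suffix t s -> treach u v (Con (cW s x)) (Con (cW t x)).
Proof.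
move=> HW /suffixP [p E]; subst s.
elim: p HW => /= [|a p IH] HW; first exact: treach_refl.
apply: treach_step (st_rule (r_Wta HW)) _. apply: IH.
apply: isW_suffix HW _; exact: suffix_cons.
Qed.

Lemma W_kill (Sigma : finType) (n : nat) u v (s : seq Sigma) (x : option 'I_n) :
  isW u v (cW s x) -> treach u v (Con (cW s x)) Eps.
Proof.
move=> HW. apply: treach_trans (W_reduce HW (suffix0s s)) _.
have HW0 := isW_suffix HW (suffix0s s).
case: x HW HW0 => [k|] HW HW0.
- apply: treach_step (st_rule (r_Wtk HW0)) _.
  apply: treach_rule; apply: r_Weps; exists k; left; exact: suffix0s.
- apply: treach_rule; exact: r_Weps.
Qed.

Lemma rule_W (Sigma : finType) (n : nat) u v (c : const Sigma n) l R0 :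
  rule u v c l R0 -> isW u v c -> R0 = Eps \/ exists W, R0 = Con W /\ isW u v W.
Proof.
case=> //=.
- move=> a w k H _; right; eexists; split; first reflexivity.
  apply: isW_suffix H _; exact: suffix_cons.
- move=> w k H _; right; eexists; split; first reflexivity.
  case: H => [H|H]; exists k; [left|right]; exact H.
- move=> a w k H _; right; eexists; split; first reflexivity.
  apply: isW_suffix H _; exact: suffix_cons.
- move=> w k H _; right; eexists; split; first reflexivity.
  case: H => [H|H]; exists k; [left|right]; exact H.
- by left.
Qed.

Lemma UV_to_W (Sigma : finType) (n : nat) u v (W : const Sigma n) :
  isW u v W -> exists c, isUV c /\ treach u v (Con c) (Con W).
Proof.
case: W => //= s [k|].
- move=> [H|H].
  + exists (cU Sigma k); split=> //. apply: treach_step (st_rule (r_U _ _ k)) _.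
    apply: W_reduce H; left; exact: suffix_refl.
  + exists (cV Sigma k); split=> //. apply: treach_step (st_rule (r_V _ _ k)) _.
    apply: W_reduce H; right; exact: suffix_refl.
- move=> [k [H|H]].
  + exists (cU Sigma k); split=> //. apply: treach_step (st_rule (r_U _ _ k)) _.
    apply: treach_trans (W_reduce (x := Some k) _ H) _; first by left; exact: suffix_refl.
    apply: treach_rule; apply: r_Wtk; by left.
  + exists (cV Sigma k); split=> //. apply: treach_step (st_rule (r_V _ _ k)) _.
    apply: treach_trans (W_reduce (x := Some k) _ H) _; first by right; exact: suffix_refl.
    apply: treach_rule; apply: r_Wtk; by right.
Qed.

Lemma UV_kill (Sigma : finType) (n : nat) u v (c : const Sigma n) :
  isUV c -> treach u v (Con c) Eps.
Proof.
case: c => //= k _.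
- apply: treach_step (st_rule (r_U _ _ k)) _; apply: W_kill; left; exact: suffix_refl.
- apply: treach_step (st_rule (r_V _ _ k)) _; apply: W_kill; right; exact: suffix_refl.
Qed.

Lemma Pc_cons (Sigma : finType) (n : nat) (c : const Sigma n) cs : Pc (c :: cs) = Seq (Con c) (Pc cs).
Proof. by []. Qed.

Lemma treach_seq_kill (Sigma : finType) (n : nat) u v (X Y : proc Sigma n) :
  treach u v X Eps -> treach u v Y Eps -> treach u v (Seq X Y) Eps.
Proof.
move=> H1 H2; apply: treach_trans (treach_seq _ H1) _.
apply: treach_sc_l H2; exact: sc_seq1l.
Qed.

Lemma allc_impl (Sigma : finType) (n : nat) (P Q : const Sigma n -> Prop) cs :
  allc P cs -> (forall c, P c -> Q c) -> allc Q cs.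
Proof. elim: cs => //= c cs IH [H1 H2] H; split; [exact: H| exact: IH]. Qed.

Lemma allc_cat (Sigma : finType) (n : nat) (P : const Sigma n -> Prop) a b :
  allc P a -> allc P b -> allc P (a ++ b).
Proof. elim: a => //= c a IH [H1 H2] H; split=> //; exact: IH. Qed.

Lemma Pc_kill (Sigma : finType) (n : nat) u v (cs : seq (const Sigma n)) :
  allc (fun c => isUV c \/ isW u v c) cs -> treach u v (Pc cs) Eps.
Proof.
elim: cs => [|c cs IH] /=; first by move=> _; exact: treach_refl.
move=> [Hc Hcs]; rewrite Pc_cons; apply: treach_seq_kill (IH Hcs).
case: Hc; [exact: UV_kill| case: c => //= s x; exact: W_kill].
Qed.

Lemma gen (Sigma : finType) (n : nat) u v (g : const Sigma n) (Pa : const Sigma n -> Prop) :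
  (forall c, Pa c -> rule u v g tau (Seq (Con g) (Con c))) ->
  forall cs, allc Pa cs -> treach u v (Con g) (Seq (Con g) (Pc cs)).
Proof.
move=> Hg; elim=> [|c cs IH] /=.
- move=> _; apply: treach_sc; exact: sc_sym (sc_seq1r _).
- move=> [Hc Hcs]; apply: treach_trans (IH Hcs) _.
  apply: treach_sc_r (treach_seq _ (treach_rule (Hg _ Hc))) _.
  rewrite Pc_cons; exact: sc_sym (sc_seqA _ _ _).
Qed.

Definition isU (Sigma : finType) (n : nat) (c : const Sigma n) := exists k, c = cU Sigma k.
Definition isV (Sigma : finType) (n : nat) (c : const Sigma n) := exists k, c = cV Sigma k.

Lemma allc_U (Sigma : finType) (n : nat) (pu : seq 'I_n) : allc (@isU Sigma n) (map (@cU Sigma n) pu).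
Proof. elim: pu => //= k pu IH; split=> //; by exists k. Qed.
Lemma allc_V (Sigma : finType) (n : nat) (pu : seq 'I_n) : allc (@isV Sigma n) (map (@cV Sigma n) pu).
Proof. elim: pu => //= k pu IH; split=> //; by exists k. Qed.

Lemma Pu_Pc (Sigma : finType) (n : nat) (pu : seq 'I_n) : Pu Sigma pu = Pc (map (@cU Sigma n) pu).
Proof. by rewrite /Pu /Pc -map_comp. Qed.
Lemma Pv_Pc (Sigma : finType) (n : nat) (pu : seq 'I_n) : Pv Sigma pu = Pc (map (@cV Sigma n) pu).
Proof. by rewrite /Pv /Pc -map_comp. Qed.

Lemma U_UV (Sigma : finType) (n : nat) (c : const Sigma n) : isU c -> isUV c.
Proof. by case=> k ->. Qed.
Lemma V_UV (Sigma : finType) (n : nat) (c : const Sigma n) : isV c -> isUV c.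
Proof. by case=> k ->. Qed.

Lemma treach_hub (Sigma : finType) (n : nat) u v (H X Y : proc Sigma n) :
  treach u v H X -> treach u v X H -> treach u v H Y -> treach u v Y H -> Mut u v X Y.
Proof. move=> *; split; apply: treach_trans; eassumption. Qed.

Lemma sc_parAC (Sigma : finType) (n : nat) (A B C : proc Sigma n) :
  sc (Par (Par A B) C) (Par (Par A C) B).
Proof.
apply: sc_trans (sc_sym (sc_parA _ _ _)) _.
apply: sc_trans (sc_par (sc_refl _) (sc_parC _ _)) _. exact: sc_parA.
Qed.

Lemma sc_parCA (Sigma : finType) (n : nat) (A B C : proc Sigma n) :
  sc (Par A (Par B C)) (Par B (Par A C)).
Proof.
apply: sc_trans (sc_parA _ _ _) _.
apply: sc_trans (sc_par (sc_parC _ _) (sc_refl _)) _. exact: sc_sym (sc_parA _ _ _).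
Qed.

Lemma rule_D (Sigma : finType) (n : nat) u v l (R0 : proc Sigma n) :
  rule u v cD l R0 -> (l = tau /\ R0 = Par (Con cD) (Con cGu)) \/ (l = lamD /\ R0 = Con cC).
Proof. move=> H; inversion H; subst; [left|right]; split=> //. Qed.

Lemma D_UV (Sigma : finType) (n : nat) u v (c : const Sigma n) :
  isUV c -> treach u v (Con cD) (Par (Con cD) (Con c)).
Proof.
move=> Hc. apply: treach_step (st_rule (r_D1 _ _)) _. apply: treach_parr.
case: c Hc => //= k _.
- apply: treach_step (st_rule (r_Gu1 _ _ k)) _.
  apply: treach_step (st_seq _ (st_rule (r_Gu3 _ _))) _.
  apply: treach_step (st_seq _ (st_rule (r_Gv'2 _ _))) _.
  apply: treach_step (st_seq _ (st_rule (r_Z1 _ _))) _.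
  apply: treach_sc; exact: sc_seq1l.
- apply: treach_step (st_rule (r_Gu3 _ _)) _.
  apply: treach_step (st_rule (r_Gv'1 _ _ k)) _.
  apply: treach_step (st_seq _ (st_rule (r_Gv'2 _ _))) _.
  apply: treach_step (st_seq _ (st_rule (r_Z1 _ _))) _.
  apply: treach_sc; exact: sc_seq1l.
Qed.

Lemma D_W (Sigma : finType) (n : nat) u v (W : const Sigma n) :
  isW u v W -> treach u v (Con cD) (Par (Con cD) (Con W)).
Proof.
move=> /UV_to_W [c [Hc H]]. apply: treach_trans (D_UV u v Hc) _. exact: treach_parr.
Qed.

Lemma hub_ctx (Sigma : finType) (n : nat) u v (H Y S : proc Sigma n) :
  treach u v H (Par H S) -> treach u v (Par H Y) (Par (Par H Y) S).
Proof. move=> HH; apply: treach_sc_r (treach_parl _ HH) _; exact: sc_parAC. Qed.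

Lemma kill_ctx (Sigma : finType) (n : nat) u v (X S : proc Sigma n) :
  treach u v S Eps -> treach u v (Par X S) X.
Proof. move=> HH; apply: treach_sc_r (treach_parr _ HH) _; exact: sc_par0r. Qed.

Lemma G_rule (Sigma : finType) (n : nat) u v (c : const Sigma n) :
  isUV c -> rule u v cG tau (Seq (Con cG) (Con c)).
Proof. case: c => //= k _; [exact: r_G1| exact: r_G2]. Qed.

Lemma C_S (Sigma : finType) (n : nat) u v (W : const Sigma n) L :
  isW u v W -> allc (@isUV Sigma n) L ->
  treach u v (Con cC) (Par (Con cC) (Seq (Con W) (Pc L))).
Proof.
move=> /UV_to_W [c [Hc H]] HL. apply: treach_step (st_rule (r_C3 _ _)) _. apply: treach_parr.
apply: treach_trans (gen (G_rule u v) (cs := c :: L) _) _; first by split.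
apply: treach_step (st_seq _ (st_rule (r_G3 _ _))) _.
apply: treach_sc_l (sc_seq1l _) _. rewrite Pc_cons. exact: treach_seq.
Qed.

Definition KR (Sigma : finType) (n : nat) u v (L : seq (const Sigma n)) (P Q : proc Sigma n) :=
  exists Y W', isW u v W' /\ sc P (Par (Par (Con cD) Y) (Seq (Con W') (Pc L)))
                /\ Mut u v Q (Par (Con cD) Y).

Definition BRs (Sigma : finType) (n : nat) u v (L : seq (const Sigma n)) (P Q : proc Sigma n) :=
  Mut u v P Q \/ KR u v L P Q.

Lemma cat_split1 (T : Type) (Ma Mb A : seq T) y s :
  Ma ++ y :: Mb = A ++ [:: s] ->
  (exists M1b, A = Ma ++ y :: M1b /\ Mb = M1b ++ [:: s]) \/ (y = s /\ Mb = [::] /\ Ma = A).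
Proof.
elim: Ma A => [|z Ma IH] [|a A] /=.
- by case=> -> ->; right.
- case=> -> ->; left; by exists A.
- by case=> _ /(congr1 size); rewrite size_cat /= addnS.
- case=> -> /IH [[M1b [-> ->]]|[-> [-> ->]]]; [left; by exists M1b| by right].
Qed.

Lemma MutD_ctx (Sigma : finType) (n : nat) u v (Y S : proc Sigma n) :
  treach u v (Con cD) (Par (Con cD) S) -> treach u v S Eps ->
  Mut u v (Par (Par (Con cD) Y) S) (Par (Con cD) Y).
Proof.
move=> H1 H2; split; [exact: kill_ctx| exact: hub_ctx].
Qed.

Lemma pcsS (Sigma : finType) (n : nat) (W : const Sigma n) L :
  exists s, pcs (Seq (Con W) (Pc L)) = [:: s] /\ sc s (Seq (Con W) (Pc L)).
Proof.
rewrite /=; case: eqP => h.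
- exists (Con W); split=> //. apply: sc_sym.
  exact: sc_trans (sc_seq (sc_refl _) (cnt0_sc h)) (sc_seq1r _).
- exists (Seq (Con W) (Pc L)); split=> //; exact: sc_refl.
Qed.

Lemma Wc_kill (Sigma : finType) (n : nat) u v (W : const Sigma n) :
  isW u v W -> treach u v (Con W) Eps.
Proof. case: W => //= s x HW; exact: W_kill. Qed.

Lemma T3 (Sigma : finType) (n : nat) u v (L : seq (const Sigma n)) :
  treach u v (Con cD) (Par (Con cD) (Pc L)) ->
  treach u v (Pc L) Eps ->
  allc (@isUV Sigma n) L ->
  forall P Q l P', KR u v L P Q -> step u v P l P' ->
  exists Q'' Q', taus u v Q Q'' /\ step u v Q'' l Q' /\ BRs u v L P Q'' /\ BRs u v L P' Q'.
Proof.
move=> HL HLk HLc P Q l P' [Y [W' [HW [HP HQ]]]] HS.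
set S := Seq (Con W') (Pc L).
have [Q0 [HQ0 HQ0s]] := proj1 HQ.
have KP0 : BRs u v L P Q0.
  right; exists Y, W'; split=> //; split=> //.
  split; apply: treach_sc => //; exact: sc_sym.
have HSk : treach u v S Eps.
  apply: treach_seq_kill HLk. case: W' HW {HP HQ KP0 S} => //= s x HW; exact: W_kill.
have [x [x' [R [Hc [Hx [H1 H2]]]]]] := step_inv HS.
have Hperm : perm (x :: pcs R) ((Con cD :: pcs Y) ++ pcs S).
  have := pcs_sc (sc_trans (sc_sym H1) HP). by rewrite /= Hc.
have [s [Es Hs]] := pcsS W' L. rewrite -/S in Es Hs.
rewrite Es in Hperm.
have [Ma [y [Mb [E [Hxy HR]]]]] := perm_extract Hperm (La := [::]) erefl.
case: Ma E HR => [|z Ma'] /= E HR.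
- (* the D component steps *)
  case: E => Ey EMb; subst y Mb.
  have Elx : lin x = Some [:: cD] by rewrite (lin_sc Hxy).
  have [R0 [Hr HR0]] := list_inv Hx Elx.
  have HRs : sc R (Par Y S).
    apply: perm_pcs_sc; have -> : pcs (Par Y S) = pcs Y ++ pcs S by []. by rewrite Es.
  have HP' : sc P' (Par R0 (Par Y S)).
    apply: sc_trans H2 _; apply: sc_par HRs.
    exact: sc_trans HR0 (sc_seq1r _).
  exists Q0, (Par R0 Y); split=> //; split; first exact: st_sc HQ0s (st_parl _ (st_rule Hr)) (sc_refl _).
  split=> //.
  case: (rule_D Hr) => [[_ ER]|[_ ER]]; subst R0.
  + right; exists (Par (Con cGu) Y), W'; split=> //; split.
    * apply: sc_trans HP' _. apply: sc_trans (sc_sym (sc_parA _ _ _)) _.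
      apply: sc_trans (sc_par (sc_refl _) (sc_parA _ _ _)) _. exact: sc_parA.
    * split; apply: treach_sc; [exact: sc_sym (sc_parA _ _ _)| exact: sc_parA].
  + left; split.
    * apply: treach_sc_l HP' _. exact: treach_parr _ (kill_ctx _ HSk).
    * apply: treach_sc_r (hub_ctx _ (C_S HW HLc)) _.
      apply: sc_sym; apply: sc_trans HP' _. exact: sc_parA.
- case: E => Ez E. subst z.
  case: (cat_split1 (esym E)) => [[M1b [EY EMb]]|[Ey [EMb EMa]]].
  + (* a component of Y steps *)
    have Hall := pcs_comp Y. rewrite EY in Hall.
    move: Hall => /allp_cat [Ha /= [Hyc Hb]].
    set Y0 := parall (Ma' ++ M1b).
    have HY0 : pcs Y0 = Ma' ++ M1b by apply: pcs_parall; apply/allp_cat.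
    have HYs : sc Y (Par y Y0).
      apply: perm_pcs_sc.
      have -> : pcs (Par y Y0) = pcs y ++ pcs Y0 by [].
      rewrite Hyc HY0 EY. apply: perm_sym; exact: perm_middle.
    have HRs : sc R (Par (Con cD) (Par Y0 S)).
      apply: perm_pcs_sc.
      have -> : pcs (Par (Con cD) (Par Y0 S)) = Con cD :: (pcs Y0 ++ pcs S) by [].
      rewrite HY0 Es -catA -EMb; exact: HR.
    have Hyx : step u v y l x' by apply: st_sc Hx (sc_refl _); exact: sc_sym.
    set Y' := Par x' Y0.
    exists Q0, (Par (Con cD) Y'); split=> //; split.
      apply: st_sc HQ0s (st_parr _ (st_sc HYs (st_parl _ Hyx) (sc_refl _))) (sc_refl _).
    split=> //. right; exists Y', W'; split=> //; split.
    * apply: sc_trans H2 _. apply: sc_trans (sc_par (sc_refl _) HRs) _.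
      apply: sc_trans (sc_parCA _ _ _) _. apply: sc_trans _ (sc_parA _ _ _).
      apply: sc_par; first exact: sc_refl. exact: sc_parA.
    * split; exact: treach_refl.
  + (* the W-component steps *)
    subst y Mb Ma'.
    have HRs : sc R (Par (Con cD) Y) by apply: perm_pcs_sc; rewrite cats0 in HR; exact: HR.
    have Elx : lin x = Some (W' :: L) by rewrite (lin_sc (sc_trans Hxy Hs)) /= lin_Pc.
    have [R0 [Hr HR0]] := list_inv Hx Elx.
    have HX : treach u v (Par (Con cD) Y) (Par (Par (Con cD) Y) (Con W')) by apply: hub_ctx; exact: D_W.
    have [Q1 [HQ1 HQ1s]] := treach_trans (proj1 HQ) HX.
    have HP' : sc P' (Par (Par (Con cD) Y) (Seq R0 (Pc L))).
      apply: sc_trans H2 _; apply: sc_trans (sc_par HR0 HRs) _; exact: sc_parC.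
    exists Q1, (Par (Par (Con cD) Y) R0); split=> //; split.
      exact: st_sc HQ1s (st_parr _ (st_rule Hr)) (sc_refl _).
    split.
    * right; exists Y, W'; split=> //; split=> //; split.
      - apply: treach_sc_l HQ1s _; apply: kill_ctx; exact: Wc_kill.
      - apply: treach_sc_r HX _; exact: sc_sym.
    * case: (rule_W Hr HW) => [ER|[W'' [ER HW'']]]; subst R0.
      - left; split.
        + apply: treach_sc_l HP' _.
          apply: treach_sc_l (sc_par (sc_refl _) (sc_seq1l _)) _.
          apply: treach_sc_r (kill_ctx _ HLk) _; exact: sc_sym (sc_par0r _).
        + apply: treach_sc_l (sc_par0r _) _. apply: treach_sc_r (hub_ctx _ HL) _.
          apply: sc_sym; apply: sc_trans HP' _.
          apply: sc_par; first exact: sc_refl. exact: sc_seq1l.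
      - right; exists Y, W''; split=> //; split=> //; split.
        + apply: kill_ctx; exact: Wc_kill.
        + apply: hub_ctx; exact: D_W.
Qed.

Definition BR (Sigma : finType) (n : nat) u v (L : seq (const Sigma n)) (P Q : proc Sigma n) :=
  Mut u v P Q \/ KR u v L P Q \/ KR u v L Q P.

Lemma KR_reach (Sigma : finType) (n : nat) u v (L : seq (const Sigma n)) (P Q : proc Sigma n) :
  treach u v (Pc L) Eps -> KR u v L P Q -> treach u v P Q.
Proof.
move=> HLk [Y [W' [HW [HP HQ]]]]. apply: treach_sc_l HP _.
apply: treach_trans (kill_ctx _ _) (proj2 HQ).
apply: treach_seq_kill HLk; exact: Wc_kill.
Qed.

Lemma BR_bisim (Sigma : finType) (n : nat) u v (L : seq (const Sigma n)) :
  treach u v (Con cD) (Par (Con cD) (Pc L)) ->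
  treach u v (Pc L) Eps ->
  allc (@isUV Sigma n) L ->
  branching_bisimulation u v (BR u v L).
Proof.
move=> HL HLk HLc; split=> P Q HB l P' HS; left.
- case: HB => [HM|[HK|HK]].
  + have [Q'' [Q' [H1 [H2 [H3 H4]]]]] := match_reach (proj2 HM) HS.
    exists Q'', Q'; do 2 (split=> //); split; by left.
  + have [Q'' [Q' [H1 [H2 [H3 H4]]]]] := T3 HL HLk HLc HK HS.
    exists Q'', Q'; do 2 (split=> //); split;
      [case: H3 => H3; [by left| by right; left]| case: H4 => H4; [by left| by right; left]].
  + have [Q'' [Q' [H1 [H2 [H3 H4]]]]] := match_reach (KR_reach HLk HK) HS.
    exists Q'', Q'; do 2 (split=> //); split; by left.
- case: HB => [HM|[HK|HK]].
  + have [Q'' [Q' [H1 [H2 [[H3 H3'] [H4 H4']]]]]] := match_reach (proj1 HM) HS.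
    exists Q'', Q'; do 2 (split=> //); split; by left.
  + have [Q'' [Q' [H1 [H2 [[H3 H3'] [H4 H4']]]]]] := match_reach (KR_reach HLk HK) HS.
    exists Q'', Q'; do 2 (split=> //); split; by left.
  + have [Q'' [Q' [H1 [H2 [H3 H4]]]]] := T3 HL HLk HLc HK HS.
    exists Q'', Q'; do 2 (split=> //); split.
    * case: H3 => [[H3 H3']|H3]; [by left| by right; right].
    * case: H4 => [[H4 H4']|H4]; [by left| by right; right].
Qed.

Lemma Mut_bbisim (Sigma : finType) (n : nat) u v (P Q : proc Sigma n) :
  Mut u v P Q -> bbisim u v P Q.
Proof. move=> H; exists (@Mut Sigma n u v); split=> //; exact: Mut_bisim. Qed.

Lemma Gu_rule (Sigma : finType) (n : nat) u v (c : const Sigma n) :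
  isU c -> rule u v cGu tau (Seq (Con cGu) (Con c)).
Proof. case=> k ->; exact: r_Gu1. Qed.
Lemma Gv'_rule (Sigma : finType) (n : nat) u v (c : const Sigma n) :
  isV c -> rule u v cGv' tau (Seq (Con cGv') (Con c)).
Proof. case=> k ->; exact: r_Gv'1. Qed.
Lemma Gv_rule (Sigma : finType) (n : nat) u v (c : const Sigma n) :
  isV c -> rule u v cGv tau (Seq (Con cGv) (Con c)).
Proof. case=> k ->; exact: r_Gv1. Qed.
Lemma G'_rule (Sigma : finType) (n : nat) u v (c : const Sigma n) :
  isUV c \/ isW u v c -> rule u v cG' tau (Seq (Con cG') (Con c)).
Proof.
case=> [|H]; last exact: r_G'3.
case: c => //= k _; [exact: r_G'1| exact: r_G'2].
Qed.

Lemma junk_UV (Sigma : finType) (n : nat) u v (c : const Sigma n) : isUV c -> isUV c \/ isW u v c.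
Proof. by left. Qed.

Theorem corollary1 (Sigma : finType) (n : nat) (u v : 'I_n -> seq Sigma) :
  2 <= #|Sigma| ->
  (forall k, u k <> [::]) -> (forall k, v k <> [::]) ->
  forall (pu pv : seq 'I_n) (p q : seq (const Sigma n)) (W : const Sigma n),
  allc (@isUV Sigma n) p ->
  allc (fun c => isUV c \/ isW u v c) q ->
  isW u v W ->
  let bs := bbisim u v in
  let PU := Pu Sigma pu in
  let PV := Pv Sigma pv in
  let PP := Pc p in
  let QQ := Pc q in
  (* (1) *)
  (bs (Con cD) (Par (Con cD) (Seq (Con cGu) PU))
   /\ bs (Par (Con cD) (Seq (Con cGu) PU)) (Par (Con cD) (Seq (Con cGv') (Seq PV PU)))
   /\ bs (Par (Con cD) (Seq (Con cGv') (Seq PV PU))) (Par (Con cD) (Seq (Con cZ) (Seq PV PU)))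
   /\ bs (Par (Con cD) (Seq (Con cZ) (Seq PV PU))) (Par (Con cD) (Seq PV PU))
   /\ bs (Par (Con cD) (Seq PV PU)) (Par (Con cD) (Seq (Con W) (Seq PV PU))))
  /\
  (* (2) *)
  (bs (Con cC) (Par (Con cC) (Seq (Con cG) PP))
   /\ bs (Par (Con cC) (Seq (Con cG) PP)) (Par (Con cC) PP)
   /\ bs (Par (Con cC) PP) (Par (Con cC) (Seq (Con W) PP))
   /\ bs (Par (Con cC) (Seq (Con W) PP)) (Par (Con cC) (Seq (Con cGv) PV)))
  /\
  (* (3) *)
  (bs (Con cC') (Par (Con cC') (Seq (Con cG') QQ))
   /\ bs (Par (Con cC') (Seq (Con cG') QQ)) (Par (Con cC') (Seq (Con cGv) QQ))
   /\ bs (Par (Con cC') (Seq (Con cGv) QQ)) (Par (Con cC') (Seq (Con cZ) QQ))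
   /\ bs (Par (Con cC') (Seq (Con cZ) QQ)) (Par (Con cC') QQ)).
Proof.
move=> _ _ _ pu pv p q W Hp Hq HW bs PU PV PP QQ.
rewrite {}/bs {}/PU {}/PV {}/PP {}/QQ Pu_Pc Pv_Pc.
set LU := map (@cU Sigma n) pu. set LV := map (@cV Sigma n) pv.
have HU : allc (@isU Sigma n) LU by exact: allc_U.
have HV : allc (@isV Sigma n) LV by exact: allc_V.
have kU : treach u v (Pc LU) Eps.
  apply: Pc_kill; apply: (allc_impl HU) => c Hc; left; exact: U_UV.
have kV : treach u v (Pc LV) Eps.
  apply: Pc_kill; apply: (allc_impl HV) => c Hc; left; exact: V_UV.
have kVU : treach u v (Seq (Pc LV) (Pc LU)) Eps by exact: treach_seq_kill.
have kZ : treach u v (Con (@cZ Sigma n)) Eps by exact: treach_rule (r_Z1 _ _).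
have kGv' : treach u v (Con (@cGv' Sigma n)) Eps.
  apply: treach_step (st_rule (r_Gv'2 _ _)) kZ.
have kGu : treach u v (Con (@cGu Sigma n)) Eps.
  apply: treach_step (st_rule (r_Gu3 _ _)) kGv'.
have kGv : treach u v (Con (@cGv Sigma n)) Eps by exact: treach_rule (r_Gv2 _ _).
have kG : treach u v (Con (@cG Sigma n)) Eps by exact: treach_rule (r_G3 _ _).
have kG' : treach u v (Con (@cG' Sigma n)) Eps.
  apply: treach_step (st_rule (r_G'5 _ _)) kZ.
have kP : treach u v (Pc p) Eps.
  apply: Pc_kill; apply: (allc_impl Hp) => c Hc; by left.
have kQ : treach u v (Pc q) Eps by exact: Pc_kill.
have kW : treach u v (Con W) Eps by exact: Wc_kill.
set D := Con (@cD Sigma n).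
have g1 : treach u v D (Par D (Seq (Con cGu) (Pc LU))).
  apply: treach_step (st_rule (r_D1 _ _)) _. apply: treach_parr. exact: (gen (Gu_rule u v) HU).
have g2 : treach u v D (Par D (Seq (Con cGv') (Seq (Pc LV) (Pc LU)))).
  apply: treach_trans g1 _. apply: treach_parr.
  apply: treach_trans (treach_seq _ (treach_rule (r_Gu3 _ _))) _.
  have G2 := gen (Gv'_rule u v) HV.
  apply: treach_trans (treach_seq (Pc LU) G2) _. apply: treach_sc.
  exact: sc_sym (sc_seqA _ _ _).
have g3 : treach u v D (Par D (Seq (Con cZ) (Seq (Pc LV) (Pc LU)))).
  apply: treach_trans g2 _. apply: treach_parr. exact: treach_seq _ (treach_rule (r_Gv'2 _ _)).
have g4 : treach u v D (Par D (Seq (Pc LV) (Pc LU))).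
  apply: treach_trans g3 _. apply: treach_parr.
  apply: treach_sc_r (treach_seq _ kZ) _. exact: sc_seq1l.
have k1 : treach u v (Par D (Seq (Con cGu) (Pc LU))) D by exact: kill_ctx _ (treach_seq_kill kGu kU).
have k2 : treach u v (Par D (Seq (Con cGv') (Seq (Pc LV) (Pc LU)))) D
  by exact: kill_ctx _ (treach_seq_kill kGv' kVU).
have k3 : treach u v (Par D (Seq (Con cZ) (Seq (Pc LV) (Pc LU)))) D
  by exact: kill_ctx _ (treach_seq_kill kZ kVU).
have k4 : treach u v (Par D (Seq (Pc LV) (Pc LU))) D by exact: kill_ctx _ kVU.
set C := Con (@cC Sigma n).
have HpUV : allc (@isUV Sigma n) p := Hp.
have c1 : treach u v C (Par C (Seq (Con cG) (Pc p))).
  apply: treach_step (st_rule (r_C3 _ _)) _. apply: treach_parr. exact: (gen (G_rule u v) Hp).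
have c2 : treach u v C (Par C (Pc p)).
  apply: treach_trans c1 _. apply: treach_parr.
  apply: treach_sc_r (treach_seq _ kG) _. exact: sc_seq1l.
have c3 : treach u v C (Par C (Seq (Con W) (Pc p))) by exact: C_S.
have c4 : treach u v C (Par C (Seq (Con cGv) (Pc LV))).
  apply: treach_step (st_rule (r_C4 _ _)) _. apply: treach_parr. exact: (gen (Gv_rule u v) HV).
have d1 : treach u v (Par C (Seq (Con cG) (Pc p))) C by exact: kill_ctx _ (treach_seq_kill kG kP).
have d2 : treach u v (Par C (Pc p)) C by exact: kill_ctx _ kP.
have d3 : treach u v (Par C (Seq (Con W) (Pc p))) C by exact: kill_ctx _ (treach_seq_kill kW kP).
have d4 : treach u v (Par C (Seq (Con cGv) (Pc LV))) C by exact: kill_ctx _ (treach_seq_kill kGv kV).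
set C' := Con (@cC' Sigma n).
have e1 : treach u v C' (Par C' (Seq (Con cG') (Pc q))).
  apply: treach_step (st_rule (r_C'1 _ _)) _. apply: treach_parr. exact: (gen (@G'_rule Sigma n u v) Hq).
have e2 : treach u v C' (Par C' (Seq (Con cGv) (Pc q))).
  apply: treach_trans e1 _. apply: treach_parr. exact: treach_seq _ (treach_rule (r_G'4 _ _)).
have e3 : treach u v C' (Par C' (Seq (Con cZ) (Pc q))).
  apply: treach_trans e1 _. apply: treach_parr. exact: treach_seq _ (treach_rule (r_G'5 _ _)).
have e4 : treach u v C' (Par C' (Pc q)).
  apply: treach_trans e3 _. apply: treach_parr.
  apply: treach_sc_r (treach_seq _ kZ) _. exact: sc_seq1l.
have f1 : treach u v (Par C' (Seq (Con cG') (Pc q))) C' by exact: kill_ctx _ (treach_seq_kill kG' kQ).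
have f2 : treach u v (Par C' (Seq (Con cGv) (Pc q))) C' by exact: kill_ctx _ (treach_seq_kill kGv kQ).
have f3 : treach u v (Par C' (Seq (Con cZ) (Pc q))) C' by exact: kill_ctx _ (treach_seq_kill kZ kQ).
have f4 : treach u v (Par C' (Pc q)) C' by exact: kill_ctx _ kQ.
have hD0 : treach u v D D := treach_refl _ _ _.
have hC0 : treach u v C C := treach_refl _ _ _.
have hC'0 : treach u v C' C' := treach_refl _ _ _.
split; [|split].
- split; [|split; [|split; [|split]]]; try (apply: Mut_bbisim; apply: treach_hub; eassumption).
  set L := LV ++ LU.
  have HL : treach u v D (Par D (Pc L)).
    apply: treach_sc_r g4 _. apply: sc_par; first exact: sc_refl. exact: sc_sym (Pc_cat _ _).
  have HLk : treach u v (Pc L) Eps by apply: treach_sc_l (Pc_cat _ _) _.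
  have HLc : allc (@isUV Sigma n) L.
    apply: allc_cat; [apply: (allc_impl HV) => c; exact: V_UV| apply: (allc_impl HU) => c; exact: U_UV].
  exists (BR u v L); split; first exact: BR_bisim.
  right; right. exists Eps, W; split=> //; split.
  + apply: sc_par; first exact: sc_sym (sc_par0r _).
    apply: sc_seq; first exact: sc_refl. exact: sc_sym (Pc_cat _ _).
  + split.
    * apply: treach_trans k4 _; exact: treach_sc (sc_sym (sc_par0r _)).
    * apply: treach_sc_l (sc_par0r _) g4.
- split; [|split; [|split]]; apply: Mut_bbisim; apply: treach_hub; eassumption.
- split; [|split; [|split]]; apply: Mut_bbisim; apply: treach_hub; eassumption.
Qed.
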